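(* Let $G$ be a subgroup of $\Sigma_n$ and let $G^+=G\cap\Sigma_n^+$. Suppose that the set of atoms $S=\{s_1,\dots,s_n\}$ of $G^+$ has exactly $n$ elements, generates $G$, and that there is a positive integer $k$ with $D_{s_i}=D_i^k$ for all $i$. Define a binary operation on $S$ by $s_i*s_j=s_{\psi(s_i)(j)}$. Then the following are equivalent: (i) $G$ is permutation-free, i.e. the only permutation matrix in $G$ is the identity; (ii) $s(s*t)=t(t*s)$ in $G$ for all $s,t\in S$; (iii) $(S,* )$ is a cycle set and $G$ is its structure group (i.e. $s\mapsto s$ induces an isomorphism from the structure group of $(S,* )$ onto $G$).
   Context: $\Sigma_n$ is the group of $n\times n$ monomial matrices (exactly one nonzero entry in each row and column) over $\mathbb Q[q,q^{-1}]$, $q$ an indeterminate, whose nonzero entries are integer powers of $q$; $\Sigma_n^+$ is the submonoid of those whose nonzero entries are nonnegative powers of $q$. For $\sigma\in\mathfrak S_n$, $P_\sigma$ is the matrix with entry $1$ at $(i,\sigma(i))$ and $0$ elsewhere. Every monomial matrix $m$ decomposes uniquely as $m=D_mP_m$ with $D_m$ diagonal and $P_m=P_{\psi(m)}$ a permutation matrix; $\psi(m)\in\mathfrak S_n$ is the associated permutation. $D_i$ denotes $\mathrm{diag}(1,\dots,1,q,1,\dots,1)$ with $q$ in the $i$-th position. An atom of $G^+$ is an element $a\neq I$ of $G^+$ such that $a=bc$ with $b,c\in G^+$ implies $b=I$ or $c=I$. A cycle set is a set $S$ with binary operation $*$ such that each $t\mapsto s*t$ is bijective and $(s*t)*(s*u)=(t*s)*(t*u)$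 for all $s,t,u$; its structure group is the group with generators $S$ and relations $s(s*t)=t(t*s)$ for $s\ne t$. *)

(* Defs.v *)
From HB Require Import structures.
From mathcomp Require Import all_boot all_order all_algebra all_fingroup.
From mathcomp Require Export fraction.
Set Implicit Arguments. Unset Strict Implicit. Unset Printing Implicit Defensive.
Import Order.TTheory GRing.Theory Num.Theory.
Local Open Scope ring_scope.

(* The coefficient field: Q(q) = fraction field of Q[q]; Q[q,q^-1] embeds in it,
   and all matrices considered have entries 0 or integer powers of q. *)
Definition LF : Type := {fraction {poly rat}}.
Definition q : LF := FracField.tofrac 'X.

Section Monomial.
Variable n : nat.
Local Notation M := 'M[LF]_n.

Definition qpow (x : LF) : Prop := exists z : int, x = q ^ z.
Definition qpow_nneg (x : LF) : Prop := exists k : nat, x = q ^+ k.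

Definition monomial (m : M) : Prop :=
  (forall i, exists! j, m i j != 0) /\
  (forall j, exists! i, m i j != 0) /\
  (forall i j, m i j != 0 -> qpow (m i j)).

Definition monomial_pos (m : M) : Prop :=
  monomial m /\ (forall i j, m i j != 0 -> qpow_nneg (m i j)).

Definition psi (m : M) (i : 'I_n) : 'I_n :=
  odflt i [pick j | m i j != 0].

(* diagonal part D_m in m = D_m P_m *)
Definition Dpart (m : M) : M := diag_mx (\row_r m r (psi m r)).

Definition Dmat (i : 'I_n) : M := diag_mx (\row_r (if r == i then q else 1)).

(* a subgroup of GL_n(LF) (possibly infinite), given as a predicate *)
Definition is_group (H : M -> Prop) : Prop :=
  H 1%:M /\ (forall a b, H a -> H b -> H (a *m b)) /\
  (forall a, H a -> a \in unitmx /\ H (invmx a)).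

Definition subgroup_Sigma (G : M -> Prop) : Prop :=
  is_group G /\ (forall g, G g -> monomial g).

Definition Gplus (G : M -> Prop) (m : M) : Prop := G m /\ monomial_pos m.

Definition atom (G : M -> Prop) (a : M) : Prop :=
  Gplus G a /\ a <> 1%:M /\
  (forall b c, Gplus G b -> Gplus G c -> a = b *m c -> b = 1%:M \/ c = 1%:M).

Definition generates (s : 'I_n -> M) (G : M -> Prop) : Prop :=
  forall H : M -> Prop, is_group H -> (forall i, H (s i)) -> forall g, G g -> H g.

Definition permutation_free (G : M -> Prop) : Prop :=
  forall sg : 'S_n, G (perm_mx sg) -> sg = 1%g.

End Monomial.

(* Cycle sets on the index set 'I_n (S = {s_1,...,s_n} labelled by 'I_n) *)
Definition cycle_set (n : nat) (op : 'I_n -> 'I_n -> 'I_n) : Prop :=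
  (forall i, bijective (op i)) /\
  (forall i j l, op (op i j) (op i l) = op (op j i) (op j l)).

(* Structure group of (S, op), presented by words: a letter (i, b) stands for
   s_i if b = false and s_i^{-1} if b = true.  The structure group is the
   quotient of words by the congruence [sg_equiv] generated by free
   cancellation and the relations s (s*t) = t (t*s) for s <> t. *)
Definition letter (n : nat) := ('I_n * bool)%type.

Inductive sg_equiv (n : nat) (op : 'I_n -> 'I_n -> 'I_n) :
    seq (letter n) -> seq (letter n) -> Prop :=
  | sge_refl w : sg_equiv op w w
  | sge_sym w1 w2 : sg_equiv op w1 w2 -> sg_equiv op w2 w1
  | sge_trans w1 w2 w3 :
      sg_equiv op w1 w2 -> sg_equiv op w2 w3 -> sg_equiv op w1 w3
  | sge_cancel u v (i : 'I_n) (b : bool) :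
      sg_equiv op (u ++ [:: (i, b); (i, ~~ b)] ++ v) (u ++ v)
  | sge_rel u v (i j : 'I_n) : i != j ->
      sg_equiv op (u ++ [:: (i, false); (op i j, false)] ++ v)
                  (u ++ [:: (j, false); (op j i, false)] ++ v).

Definition eval_letter (n : nat) (s : 'I_n -> 'M[LF]_n) (l : letter n) : 'M[LF]_n :=
  if l.2 then invmx (s l.1) else s l.1.

Definition eval_word (n : nat) (s : 'I_n -> 'M[LF]_n) (w : seq (letter n)) : 'M[LF]_n :=
  foldr (fun l acc => eval_letter s l *m acc) 1%:M w.

(* the map s_i |-> s_i induces an isomorphism from the structure group of
   (S, op) onto G: well-defined and injective (kernel = the congruence) and
   surjective onto G *)
Definition is_structure_group (n : nat) (op : 'I_n -> 'I_n -> 'I_n)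
    (s : 'I_n -> 'M[LF]_n) (G : 'M[LF]_n -> Prop) : Prop :=
  (forall w1 w2, eval_word s w1 = eval_word s w2 <-> sg_equiv op w1 w2) /\
  (forall g, G g <-> exists w, g = eval_word s w).

(* k-th matrix power (generic in n, since 'M_n is a ring only for n > 0) *)
Definition mxpow (n : nat) (A : 'M[LF]_n) (k : nat) : 'M[LF]_n :=
  iter k (mulmx A) 1%:M.

(* Main.v *)
Require Import Defs.
From HB Require Import structures.
From mathcomp Require Import all_boot all_order all_algebra all_fingroup.
From mathcomp Require Import zify.
Import Order.TTheory GRing.Theory Num.Theory.
Local Open Scope ring_scope.
Set Implicit Arguments. Unset Strict Implicit. Unset Printing Implicit Defensive.

Lemma q_neq0 : q != 0.
Proof. by rewrite /q tofrac_eq0 polyX_eq0. Qed.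

Lemma qXn_eq1 (m : nat) : q ^+ m = 1 -> m = 0%N.
Proof.
move=> h; have: (('X : {poly rat}) ^+ m == 1).
  by rewrite -tofrac_eq /= tofracXn tofrac1 -/q h.
move/eqP => e; have := size_polyXn rat m; rewrite e size_poly1; by case.
Qed.

Lemma qz_eq1 (z : int) : q ^ z = 1 -> z = 0.
Proof.
case: z => m h; first by move: h; rewrite -exprnP => /qXn_eq1 ->.
exfalso; move: h; rewrite NegzE -exprnN => /(congr1 GRing.inv); rewrite invrK invr1.
by move/qXn_eq1.
Qed.

Lemma qz_inj (z w : int) : q ^ z = q ^ w -> z = w.
Proof.
move=> h; apply/eqP; rewrite -subr_eq0; apply/eqP/qz_eq1.
by rewrite expfzDr ?q_neq0 // h -expfzDr ?q_neq0 // subrr.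
Qed.

Lemma qz_neq0 (z : int) : q ^ z != 0.
Proof. exact: expfz_neq0 q_neq0. Qed.

Section Mxd.
Variable n : nat.
Local Notation M := 'M[LF]_n.

Definition mxd (d : 'I_n -> int) (s : 'S_n) : M :=
  \matrix_(i, j) (if s i == j then q ^ (d i) else 0).

Lemma mxd_ext d d' s : (forall i, d i = d' i) -> mxd d s = mxd d' s.
Proof. by move=> h; apply/matrixP=> i j; rewrite !mxE h. Qed.

Lemma mxd_mul d1 s1 d2 s2 :
  mxd d1 s1 *m mxd d2 s2 = mxd (fun i => d1 i + d2 (s1 i)) (s1 * s2)%g.
Proof.
apply/matrixP=> i j; rewrite !mxE (bigD1 (s1 i)) //= big1 => [|l /negbTE nl]; last first.
  by rewrite !mxE eq_sym nl mul0r.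
rewrite !mxE eqxx permM addr0; case: eqP => _; last by rewrite mulr0.
by rewrite expfzDr ?q_neq0.
Qed.

Lemma mxd1 : mxd (fun _ => 0) 1%g = 1%:M.
Proof. by apply/matrixP=> i j; rewrite !mxE perm1 expr0z; case: eqP. Qed.

Lemma mxd_invr d s : mxd d s *m mxd (fun i => - d (s^-1 i)%g) s^-1%g = 1%:M.
Proof.
rewrite mxd_mul mulgV -mxd1; apply: mxd_ext => i; by rewrite permK subrr.
Qed.

Lemma mxd_unit d s : mxd d s \in unitmx.
Proof. apply: (intro_unitmx (B := mxd (fun i => - d (s^-1 i)%g) s^-1%g)).
by split; [apply: mulmx1C|]; apply: mxd_invr. Qed.

Lemma mxd_inv d s : invmx (mxd d s) = mxd (fun i => - d (s^-1 i)%g) s^-1%g.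
Proof.
by rewrite -[RHS](mulKmx (mxd_unit d s)) mxd_invr mulmx1.
Qed.

Lemma mxd_inj d s d' s' : mxd d s = mxd d' s' -> s = s' /\ forall i, d i = d' i.
Proof.
move=> h.
have e : forall i, s' i = s i.
  move=> i; move/matrixP: h => /(_ i (s i)); rewrite !mxE eqxx.
  by case: eqP => // _ /eqP; rewrite (negbTE (qz_neq0 _)).
split; first by apply/permP=> i; rewrite e.
move=> i; move/matrixP: h => /(_ i (s i)); rewrite !mxE eqxx e eqxx.
exact: qz_inj.
Qed.

Lemma psi_mxd d s i : psi (mxd d s) i = s i.
Proof.
rewrite /psi; case: pickP => [j|h] /=.
  by rewrite !mxE; case: (s i =P j) => [->|]; rewrite ?eqxx.
by move: (h (s i)); rewrite /= !mxE eqxx (negbTE (qz_neq0 _)).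
Qed.

Lemma mxd_monomial d s : monomial (mxd d s).
Proof.
split; [|split].
- move=> i; exists (s i); split; first by rewrite mxE eqxx qz_neq0.
  by move=> j; rewrite mxE; case: (s i =P j) => // _; rewrite eqxx.
- move=> j; exists (s^-1 j)%g; split; first by rewrite mxE permKV eqxx qz_neq0.
  by move=> i; rewrite mxE; case: (s i =P j) => [<- _|]; rewrite ?permK ?eqxx.
- move=> i j; rewrite mxE; case: (s i =P j) => _; [by exists (d i)|by rewrite eqxx].
Qed.

Lemma mxd_pos d s : (forall i, 0 <= d i) -> monomial_pos (mxd d s).
Proof.
move=> h; split; first exact: mxd_monomial.
move=> i j; rewrite mxE; case: (s i =P j) => _; last by rewrite eqxx.
move=> _; exists `|d i|%N; rewrite [in LHS](_ : d i = `|d i|%N) ?exprnP // gez0_abs //.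
Qed.

Lemma monomial_mxd m : monomial m -> exists d s, m = mxd d s.
Proof.
case=> hr [hc hq].
have hp : forall i j, (m i j != 0) = (j == psi m i).
  move=> i j; rewrite /psi; case: pickP => [j' hj'|h0] /=.
    case: (hr i) => j0 [_ u]; apply/idP/eqP => [hj|->//].
    by rewrite -(u _ hj) (u _ hj').
  case: (hr i) => j0 [hj0 _]; exfalso; move: (h0 j0) => /= /negbT /negP; exact.
have inj : injective (psi m).
  move=> i1 i2 e; case: (hc (psi m i1)) => i0 [_ u].
  by rewrite -(u i1) ?(u i2) ?hp ?e.
have [d hd] : exists d : 'I_n -> int, forall i, m i (psi m i) = q ^ (d i).
  apply: (@fin_all_exists _ (fun _ => int) (fun i z => m i (psi m i) = q ^ z)) => i.
  apply: hq; by rewrite hp.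
exists d, (perm inj); apply/matrixP=> i j; rewrite mxE permE.
case: eqP => [<-|ne]; first exact: hd.
by apply/eqP; rewrite -[_ == 0]negbK hp; apply/eqP => /esym.
Qed.

Lemma perm_mxd s : perm_mx s = mxd (fun _ => 0) s.
Proof. by apply/matrixP=> i j; rewrite !mxE expr0z; case: eqP. Qed.

End Mxd.

Lemma cong n (op : 'I_n -> 'I_n -> 'I_n) a b : sg_equiv op a b ->
  forall x y, sg_equiv op (x ++ a ++ y) (x ++ b ++ y).
Proof.
elim=> {a b}.
- move=> w x y; exact: sge_refl.
- move=> w1 w2 _ IH x y; exact: sge_sym (IH x y).
- move=> w1 w2 w3 _ IH1 _ IH2 x y; exact: sge_trans (IH1 x y) (IH2 x y).
- move=> u v i b x y.
  have := sge_cancel op (x ++ u) (v ++ y) i b; by rewrite -!catA.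
- move=> u v i j ij x y.
  have := @sge_rel n op (x ++ u) (v ++ y) i j ij; by rewrite -!catA.
Qed.

Lemma congl n (op : 'I_n -> 'I_n -> 'I_n) a b x : sg_equiv op a b ->
  sg_equiv op (x ++ a) (x ++ b).
Proof. by move/cong/(_ x [::]); rewrite !cats0. Qed.

Lemma congr n (op : 'I_n -> 'I_n -> 'I_n) a b y : sg_equiv op a b ->
  sg_equiv op (a ++ y) (b ++ y).
Proof. by move/cong/(_ [::] y). Qed.

Lemma dvd_ge (a b : int) (k : nat) : (0 < k)%N -> 0 < a -> a = b * k%:Z -> k%:Z <= a.
Proof. move=> hk ha e.
have hb : 0 < b by move: ha; rewrite e pmulr_lgt0 // ltz_nat.
rewrite e -{1}(mul1r k%:Z) ler_wpM2r //; lia.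
Qed.

Lemma Dpart_mxd n (d : 'I_n -> int) s : Dpart (mxd d s) = mxd d 1%g.
Proof.
apply/matrixP=> r c; rewrite /Dpart !mxE psi_mxd perm1 eqxx.
by case: (r =P c) => [->|_]; rewrite ?mulr1n ?mulr0n.
Qed.

Lemma Dmat_mxd n (i : 'I_n) : Dmat i = mxd (fun r => if r == i then 1 else 0) 1%g.
Proof.
apply/matrixP=> r c; rewrite /Dmat !mxE perm1.
case: (r =P c) => [->|_]; rewrite ?mulr1n ?mulr0n //.
by case: (c == i); rewrite ?expr1z ?expr0z.
Qed.

Lemma mxpow_Dmat n (i : 'I_n) m :
  mxpow (Dmat i) m = mxd (fun r => if r == i then m%:Z else 0) 1%g.
Proof.
elim: m => [|m IH]; first by rewrite /mxpow /= -mxd1; apply: mxd_ext => r; case: (r == i).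
rewrite /mxpow iterS -/(mxpow _ _) IH Dmat_mxd mxd_mul mulg1; apply: mxd_ext => r.
rewrite perm1; case: (r == i) => //; lia.
Qed.

Lemma sum_perm n (f : 'I_n -> int) (p : 'S_n) : \sum_t f (p t) = \sum_t f t.
Proof. by rewrite [RHS](reindex_inj (@perm_inj _ p)). Qed.

Section Main.
Variables (n : nat) (G : 'M[LF]_n -> Prop) (s : 'I_n -> 'M[LF]_n) (k : nat).
Hypothesis hG : subgroup_Sigma G.
Hypothesis hat : forall a, atom G a <-> exists i, a = s i.
Hypothesis hgen : generates s G.
Hypothesis hk : (0 < k)%N.
Hypothesis hD : forall i, Dpart (s i) = mxpow (Dmat i) k.

Local Notation op := (fun i j => psi (s i) j).

Lemma G1 : G 1%:M. Proof. by case: hG => [[]]. Qed.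
Lemma GM a b : G a -> G b -> G (a *m b). Proof. by case: hG => [[_ []]] h _ _; apply: h. Qed.
Lemma GV a : G a -> G (invmx a). Proof. by case: hG => [[_ []]] _ h _ /h []. Qed.
Lemma GU a : G a -> a \in unitmx. Proof. by case: hG => [[_ []]] _ h _ /h []. Qed.
Lemma Gd g : G g -> exists d σ, g = mxd d σ.
Proof. by case: hG => _ h /h /monomial_mxd. Qed.
Lemma Gs i : G (s i).
Proof. by have [_ +] := hat (s i) => /(_ (ex_intro _ i erefl)) [[]]. Qed.

Definition ke (i r : 'I_n) : int := if r == i then k%:Z else 0.

Lemma s_form : exists τ : 'I_n -> 'S_n, forall i, s i = mxd (ke i) (τ i).
Proof.
apply: (@fin_all_exists _ (fun _ => 'S_n) (fun i σ => s i = mxd (ke i) σ)) => i.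
have [d [σ e]] := Gd (Gs i).
exists σ; rewrite e; apply: mxd_ext => r.
have := hD i; rewrite e Dpart_mxd mxpow_Dmat => /mxd_inj [_ /(_ r)].
by rewrite /ke.
Qed.

Variable τ : 'I_n -> 'S_n.
Hypothesis hs : forall i, s i = mxd (ke i) (τ i).

Lemma opE i j : psi (s i) j = τ i j.
Proof. by rewrite hs psi_mxd. Qed.

Lemma ke_ge0 i r : 0 <= ke i r.
Proof. by rewrite /ke; case: (r == i). Qed.

Lemma PF d σ : G (mxd d σ) -> (forall r, d r = 0) -> σ = 1%g.
Proof.
move=> Gx d0; have e : mxd d σ = mxd (fun _ => 0) σ by apply: mxd_ext.
rewrite e in Gx.
apply/permP => x; rewrite perm1; apply/eqP/negPn/negP => hx.
have [_ +] := hat (s x) => /(_ (ex_intro _ x erefl)) [_ [_ hA]].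
have Gi : G (mxd (fun _ => 0) σ^-1%g).
  rewrite (_ : mxd _ _ = invmx (mxd (fun _ => 0) σ)); first exact: GV.
  by rewrite mxd_inv; apply: mxd_ext => r; rewrite oppr0.
have H1 : Gplus G (s x *m mxd (fun _ => 0) σ^-1%g).
  split; first exact: GM (Gs x) Gi.
  rewrite hs mxd_mul; apply: mxd_pos => r; rewrite addr0; exact: ke_ge0.
have H2 : Gplus G (mxd (fun _ => 0) σ) by split; [exact: Gx | apply: mxd_pos => r; exact: lexx].
have H3 : s x = s x *m mxd (fun _ => 0) σ^-1%g *m mxd (fun _ => 0) σ.
  rewrite -mulmxA mxd_mul mulVg -[LHS]mulmx1 -mxd1; congr (_ *m _).
case: (hA _ _ H1 H2 H3).
- rewrite hs mxd_mul -mxd1 => /mxd_inj [_ /(_ x)].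
  rewrite /ke eqxx addr0 => /eqP; rewrite eqz_nat => /eqP k0.
  by move: hk; rewrite k0.
- rewrite -mxd1 => /mxd_inj [e1 _]; move: hx; by rewrite e1 perm1 eqxx.
Qed.

Lemma SameD d α d' β : G (mxd d α) -> G (mxd d' β) -> (forall r, d r = d' r) -> α = β.
Proof.
move=> Ga Gb e.
have := GM (GV Gb) Ga; rewrite mxd_inv mxd_mul => /PF h.
have {h} h : (β^-1 * α = 1)%g by apply: h => r; rewrite e addNr.
by rewrite -[α]mul1g -(mulgV β) -mulgA h mulg1.
Qed.

Lemma rel_data i j :
  s i *m s (psi (s i) j) = mxd (fun r => ke i r + ke j r) (τ i * τ (τ i j))%g.
Proof.
rewrite opE !hs mxd_mul; apply: mxd_ext => r.
by rewrite /ke (inj_eq perm_inj).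
Qed.

Lemma relS i j : s i *m s (psi (s i) j) = s j *m s (psi (s j) i).
Proof.
have e : forall r, ke i r + ke j r = ke j r + ke i r by move=> r; rewrite addrC.
have G1' := GM (Gs i) (Gs (psi (s i) j)); have G2' := GM (Gs j) (Gs (psi (s j) i)).
rewrite !rel_data in G1' G2'; rewrite !rel_data (SameD G1' G2' e).
by rewrite (mxd_ext _ e).
Qed.

Lemma rel_perm i j : (τ i * τ (τ i j))%g = (τ j * τ (τ j i))%g.
Proof.
have := relS i j; rewrite !rel_data => /mxd_inj [] //.
Qed.

Lemma cycle : cycle_set op.
Proof.
split.
- move=> i; exists (fun x => ((τ i)^-1)%g x) => x /=; by rewrite ?opE ?permK ?permKV.
- move=> i j l /=; rewrite !opE -!permM; by rewrite rel_perm.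
Qed.

Lemma PFG : permutation_free G.
Proof. move=> sg; rewrite perm_mxd => /PF; exact. Qed.

Definition pos (l : letter n) := ~~ l.2.
Definition inv (w : seq (letter n)) := rev (map (fun l => (l.1, ~~ l.2)) w).

Lemma eval_cons l w : eval_word s (l :: w) = eval_letter s l *m eval_word s w.
Proof. by []. Qed.

Lemma eval_cat u v : eval_word s (u ++ v) = eval_word s u *m eval_word s v.
Proof. elim: u => [|l u IH] /=; first by rewrite mul1mx. by rewrite IH mulmxA. Qed.

Lemma sU i : s i \in unitmx. Proof. exact: GU (Gs i). Qed.

Lemma letter_cancel i b : eval_letter s (i, b) *m eval_letter s (i, ~~ b) = 1%:M.
Proof. rewrite /eval_letter /=; case: b => /=; [exact: mulVmx (sU i)|exact: mulmxV (sU i)]. Qed.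

Lemma sound u v : sg_equiv op u v -> eval_word s u = eval_word s v.
Proof.
have R := relS. elim=> {u v}.
- by [].
- by move=> w1 w2 _ ->.
- by move=> w1 w2 w3 _ -> _ ->.
- move=> u v i b; rewrite !eval_cat; congr (_ *m _).
  rewrite !eval_cons mulmxA mulmx1 letter_cancel; exact: mul1mx.
- move=> u v i j _; rewrite !eval_cat; congr (_ *m _).
  rewrite !eval_cons /eval_letter /= !mulmxA; by rewrite R.
Qed.

Lemma eval_G w : G (eval_word s w).
Proof.
elim: w => [|[i b] w IH]; first exact: G1.
rewrite eval_cons; apply: GM => //; rewrite /eval_letter /=; case: b => /=;
  [exact: GV (Gs i)|exact: Gs].
Qed.

Lemma inv_cancel_r b : sg_equiv op (b ++ inv b) [::].
Proof.
elim: b => [|[i c] b IH]; first exact: sge_refl.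
rewrite /inv /= rev_cons -cats1 -/(inv b).
have h := cong IH [:: (i, c)] [:: (i, ~~ c)]; rewrite -catA in h.
apply: sge_trans h _; exact: (sge_cancel op [::] [::] i c).
Qed.

Lemma inv_cancel_l b : sg_equiv op (inv b ++ b) [::].
Proof.
elim: b => [|[i c] b IH]; first exact: sge_refl.
rewrite /inv /= rev_cons -cats1 -/(inv b) -catA.
apply: sge_trans _ IH.
have := sge_cancel op (inv b) b i (~~ c); by rewrite negbK.
Qed.

Lemma inv_cat u v : inv (u ++ v) = inv v ++ inv u.
Proof. by rewrite /inv map_cat rev_cat. Qed.


Lemma inv_equiv u v : sg_equiv op u v -> sg_equiv op (inv u) (inv v).
Proof.
move=> uv.
apply: sge_trans (_ : sg_equiv op (inv u ++ (v ++ inv v)) _).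
  have := congl (inv u) (inv_cancel_r v); rewrite cats0; exact: sge_sym.
apply: sge_trans (_ : sg_equiv op (inv u ++ (u ++ inv v)) _).
  exact: congl (congr _ (sge_sym uv)).
rewrite catA; have := congr (inv v) (inv_cancel_l u); done.
Qed.

Lemma surj g : G g <-> exists w, g = eval_word s w.
Proof.
split; last by case=> w ->; exact: eval_G.
move=> Gg; apply: (hgen (H := fun g => exists w, g = eval_word s w)) Gg; last by move=> i; exists [:: (i, false)]; rewrite /= /eval_letter /= mulmx1.
split; first by exists [::].
split; first by move=> a b [u ->] [v ->]; exists (u ++ v); rewrite eval_cat.
move=> a [u ->].
have e : eval_word s u *m eval_word s (inv u) = 1%:M.
  by rewrite -eval_cat (sound (inv_cancel_r u)).
have U : eval_word s u \in unitmx by apply: GU; exact: eval_G.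
split => //; exists (inv u).
by rewrite -[RHS](mulKmx U) e mulmx1.
Qed.

Lemma sum_ke i : \sum_r ke i r = k%:Z.
Proof.
rewrite (bigD1 i) //= big1 ?addr0 /ke ?eqxx // => r /negbTE ->; done.
Qed.

Lemma ke_dvd i r : exists z : int, ke i r = z * k%:Z.
Proof. rewrite /ke; case: (r == i); [exists 1|exists 0]; by rewrite ?mul1r ?mul0r. Qed.

Lemma eval_data w : exists d σ, eval_word s w = mxd d σ /\
  (forall r, exists z : int, d r = z * k%:Z) /\
  (all pos w -> (forall r, 0 <= d r) /\ \sum_r d r = (k * size w)%:Z).
Proof.
elim: w => [|[i b] w [d [σ [e [dv ps]]]]].
  exists (fun _ => 0), 1%g; split; first by rewrite mxd1.
  split; first by move=> r; exists 0; rewrite mul0r.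
  by move=> _; split => // ; rewrite big1 // muln0.
rewrite eval_cons e /eval_letter /=; case: b.
- exists (fun r => - ke i ((τ i)^-1 r)%g + d ((τ i)^-1 r)%g), ((τ i)^-1 * σ)%g.
  split; first by rewrite hs mxd_inv mxd_mul.
  split => //.
  move=> r; have [z1 ->] := ke_dvd i ((τ i)^-1 r)%g; have [z2 ->] := dv ((τ i)^-1 r)%g.
  by exists (- z1 + z2); rewrite mulrDl mulNr.
- exists (fun r => ke i r + d (τ i r)), (τ i * σ)%g.
  split; first by rewrite hs mxd_mul.
  split.
    move=> r; have [z1 ->] := ke_dvd i r; have [z2 ->] := dv (τ i r).
    by exists (z1 + z2); rewrite mulrDl.
  move=> /= /ps [ps1 ps2]; split; first by move=> r; apply: addr_ge0 => //; exact: ke_ge0.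
  rewrite big_split /= sum_ke sum_perm ps2 mulnS; lia.
Qed.

Lemma data_dvd d σ : G (mxd d σ) -> forall r, exists z : int, d r = z * k%:Z.
Proof.
move=> /surj [w ew] r; have [d' [σ' [e [dv _]]]] := eval_data w.
move: ew; rewrite e => /mxd_inj [_ ->]; exact: dv.
Qed.

Lemma size_eq u v : all pos u -> all pos v -> eval_word s u = eval_word s v -> size u = size v.
Proof.
move=> pu pv.
have [d [σ [e [_ /(_ pu) [_ su]]]]] := eval_data u.
have [d' [σ' [e' [_ /(_ pv) [_ sv]]]]] := eval_data v.
rewrite e e' => /mxd_inj [_ dd].
have : (k * size u)%:Z = (k * size v)%:Z by rewrite -su -sv; apply: eq_bigr => r _.
move/eqP; rewrite eqz_nat eqn_pmul2l //; by move/eqP.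
Qed.

Lemma posword N d σ : G (mxd d σ) -> (forall r, 0 <= d r) -> \sum_r d r <= N%:Z ->
  exists w, all pos w /\ mxd d σ = eval_word s w.
Proof.
elim: N d σ => [|N IH] d σ Gx d0 sN;
  (case: (pickP (fun r => 0 < d r)) => [r hr | none]; last first).
- have dz : forall r, d r = 0 by move=> r; apply/eqP; rewrite eq_le leNgt none d0.
  exists [::]; split => //; rewrite (PF Gx dz) /= -mxd1; exact: mxd_ext.
- have : d r <= \sum_r d r.
    rewrite (bigD1 r) //= lerDl; apply: sumr_ge0 => t _; exact: d0.
  move: hr sN; lia.
- have dz : forall r, d r = 0 by move=> r; apply/eqP; rewrite eq_le leNgt none d0.
  exists [::]; split => //; rewrite (PF Gx dz) /= -mxd1; exact: mxd_ext.
- have [z dz] := data_dvd Gx r.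
  have kr := dvd_ge hk hr dz.
  have Gy := GM (GV (Gs r)) Gx.
  move: (Gy); rewrite hs mxd_inv mxd_mul => Gy'.
  have [||w [pw ew]] := IH _ _ Gy'.
  + move=> t; rewrite /ke; case: (_ =P r) => [->|_]; last by rewrite oppr0 add0r.
    move: kr; lia.
  + rewrite big_split /= sumrN (sum_perm (fun t => ke r t)) (sum_perm d) sum_ke.
    move: sN kr; lia.
  + exists ((r, false) :: w); split => //.
    rewrite eval_cons -ew /eval_letter /=.
    have -> : mxd (fun i => - ke r ((τ r)^-1%g i) + d ((τ r)^-1%g i)) ((τ r)^-1 * σ)%g
      = invmx (s r) *m mxd d σ by rewrite hs mxd_inv mxd_mul.
    rewrite mulKVmx //; exact: sU.
Qed.

Lemma posword' d σ : G (mxd d σ) -> (forall r, 0 <= d r) ->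
  exists w, all pos w /\ mxd d σ = eval_word s w.
Proof.
move=> Gx d0; apply: (posword (N := absz (\sum_r d r))) => //.
set S := \sum_r d r; lia.
Qed.

Lemma cancel_s i (A B : 'M[LF]_n) : s i *m A = s i *m B -> A = B.
Proof. by move=> e; rewrite -(mulKmx (sU i) A) e mulKmx //; exact: sU. Qed.

Lemma WP m u v : size u = m -> all pos u -> all pos v ->
  eval_word s u = eval_word s v -> sg_equiv op u v.
Proof.
elim: m u v => [|m IH] u v su pu pv e.
  have sv := size_eq pu pv e; rewrite su in sv.
  case: u su pu e => // _ _ _; case: v sv pv => // _ _; exact: sge_refl.
case: u su pu e => // [[i b]] u' /= [su'] /andP [pb pu'] e.
move: pb e; rewrite /pos /=; case: b => // _ e.
have pu : all pos ((i, false) :: u') by rewrite /= pu'.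
have sv := size_eq pu pv e; rewrite /= su' in sv.
case: v sv pv e => // [[j b]] v' /= [sv'] /andP [pb pv'] e.
move: pb e; rewrite /pos /=; case: b => // _ e.
case: (i =P j) => [ij|nij].
  subst j; apply: (congl [:: (i, false)]); apply: IH => //.
  exact: cancel_s e.
have [d1 [σ1 [e1 [_ /(_ pu') [p1 _]]]]] := eval_data u'.
have [d2 [σ2 [e2 [_ /(_ pv') [p2 _]]]]] := eval_data v'.
move: (e); rewrite /eval_letter /= e1 e2 !hs !mxd_mul => /mxd_inj [σe de].
set x := eval_word s ((i, false) :: u').
have Gx : G x by exact: eval_G.
have ex : x = mxd (fun r => ke i r + d1 (τ i r)) (τ i * σ1)%g.
  by rewrite /x eval_cons e1 /eval_letter /= hs mxd_mul.
set y := s i *m s (psi (s i) j).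
have Gy : G y by apply: GM; exact: Gs.
have Gz := GM (GV Gy) Gx.
move: (Gz); rewrite /y rel_data ex mxd_inv mxd_mul => Gz'.
have [|zw [pz ez]] := posword' Gz'.
  have key : forall t, ke i t + ke j t <= ke i t + d1 (τ i t).
    move=> t; have := de t; have := p1 (τ i t); have := p2 (τ j t).
    rewrite /ke; case: (t =P i) => [ti|_]; case: (t =P j) => [tj|_] //.
    - by exfalso; apply: nij; rewrite -ti -tj.
    - lia.
    - lia.
    - lia.
  move=> r; have := key ((τ i * τ (τ i j))^-1 r)%g; lia.
have xz : x = y *m eval_word s zw.
  have ez' : eval_word s zw = invmx y *m x by rewrite -ez /y rel_data ex mxd_inv mxd_mul.
  rewrite ez' mulKVmx //; exact: GU.
have ev : x = eval_word s [:: (i, false), (psi (s i) j, false) & zw].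
  by rewrite xz /y /= /eval_letter /= mulmxA.
have ev' : x = eval_word s [:: (j, false), (psi (s j) i, false) & zw].
  by rewrite xz /y /= /eval_letter /= mulmxA relS.
apply: sge_trans (_ : sg_equiv op [:: (i, false), (psi (s i) j, false) & zw] _).
  apply: (congl [:: (i, false)]); apply: IH => //.
  by apply: (cancel_s (i := i)); move: ev; rewrite /x /= /eval_letter /=.
apply: sge_trans (_ : sg_equiv op [:: (j, false), (psi (s j) i, false) & zw] _).
  apply: (@sge_rel n op [::] zw i j); by apply/eqP.
apply: sge_sym; apply: (congl [:: (j, false)]); apply: IH => //.
apply: (cancel_s (i := j)).
change (eval_word s ((j, false) :: v') = eval_word s [:: (j, false), (psi (s j) i, false) & zw]).
rewrite -ev'; symmetry; exact: e.
Qed.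

Lemma Ore1 a (pa : all pos a) i : exists j a', all pos a' /\
  eval_word s (a ++ [:: (j, false)]) = eval_word s ((i, false) :: a').
Proof.
have [d [σ [e [_ /(_ pa) [p _]]]]] := eval_data a.
set x := eval_word s (a ++ [:: (σ i, false)]).
have ex : x = mxd (fun r => d r + ke (σ i) (σ r)) (σ * τ (σ i))%g.
  by rewrite /x eval_cat e eval_cons /eval_letter /= mulmx1 hs mxd_mul.
have Gz := GM (GV (Gs i)) (eval_G (a ++ [:: (σ i, false)])).
rewrite -/x ex hs mxd_inv mxd_mul in Gz.
have [|a' [pa' ea']] := posword' Gz.
  have key : forall t, ke i t <= d t + ke (σ i) (σ t).
    move=> t; have := p t; rewrite /ke (inj_eq perm_inj); case: (t == i); lia.
  move=> r; have := key ((τ i)^-1 r)%g; lia.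
exists (σ i), a'; split => //.
have ez : eval_word s a' = invmx (s i) *m x by rewrite -ea' ex hs mxd_inv mxd_mul.
change (x = s i *m eval_word s a'); rewrite ez mulKVmx //; exact: sU.
Qed.

Lemma Ore b' : all pos b' -> forall b, all pos b -> exists c d, all pos c /\ all pos d /\
  eval_word s (b ++ c) = eval_word s (b' ++ d).
Proof.
elim: b' => [|[i t] b' IH] pb' b pb.
  by exists [::], b; rewrite cats0.
move: pb' => /andP [pt pb'']; move: pt; rewrite /pos /=; case: t => // _.
have [j [a' [pa' e1]]] := Ore1 pb i.
have [c' [d' [pc' [pd' e2]]]] := IH pb'' a' pa'.
exists ((j, false) :: c'), d'; split; first by rewrite /= pc'.
split => //.
rewrite -cat1s catA eval_cat e1 !eval_cons -e2 eval_cat mulmxA //.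
Qed.

Lemma NF w : exists a b, all pos a /\ all pos b /\ sg_equiv op w (a ++ inv b).
Proof.
elim: w => [|[i t] w [a [b [pa [pb e]]]]].
  by exists [::], [::]; split => //; split => //; exact: sge_refl.
case: t.
- have [j [a' [pa' e1]]] := Ore1 pa i.
  have pa1 : all pos (a ++ [:: (j, false)]) by rewrite all_cat pa.
  have pa2 : all pos ((i, false) :: a') by rewrite /= pa'.
  have W := WP (erefl _) pa1 pa2 e1.
  exists a', (b ++ [:: (j, false)]); split => //; split; first by rewrite all_cat pb.
  rewrite inv_cat.
  apply: sge_trans (_ : sg_equiv op ((i, true) :: (a ++ inv b)) _).
    exact: (congl [:: (i, true)] e).
  apply: sge_trans (_ : sg_equiv op ([:: (i, true)] ++ (a ++ [:: (j, false)]) ++ ([:: (j, true)] ++ inv b)) _).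
    apply: (congl [:: (i, true)]); apply: sge_sym.
    have := sge_cancel op a (inv b) j false; by rewrite -!catA.
  apply: sge_trans (_ : sg_equiv op ([:: (i, true)] ++ ((i, false) :: a') ++ ([:: (j, true)] ++ inv b)) _).
    exact: cong W _ _.
  have := sge_cancel op [::] (a' ++ [:: (j, true)] ++ inv b) i true; by [].
- exists ((i, false) :: a), b; split => //; split => //.
  exact: (congl [:: (i, false)] e).
Qed.

Lemma inj w1 w2 : eval_word s w1 = eval_word s w2 -> sg_equiv op w1 w2.
Proof.
move=> e.
have [a1 [b1 [pa1 [pb1 e1]]]] := NF w1.
have [a2 [b2 [pa2 [pb2 e2]]]] := NF w2.
have [c [d [pc [pd e3]]]] := Ore pb2 pb1.
have h1 : eval_word s a1 = eval_word s w1 *m eval_word s b1.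
  by rewrite (sound e1) eval_cat -mulmxA -eval_cat (sound (inv_cancel_l b1)) mulmx1.
have h2 : eval_word s a2 = eval_word s w2 *m eval_word s b2.
  by rewrite (sound e2) eval_cat -mulmxA -eval_cat (sound (inv_cancel_l b2)) mulmx1.
have E : eval_word s (a1 ++ c) = eval_word s (a2 ++ d).
  rewrite !eval_cat h1 h2 -!mulmxA.
  by rewrite -[eval_word s b1 *m _]eval_cat -[eval_word s b2 *m _]eval_cat e3 e.
have pac : all pos (a1 ++ c) by rewrite all_cat pa1.
have pad : all pos (a2 ++ d) by rewrite all_cat pa2.
have pbc : all pos (b1 ++ c) by rewrite all_cat pb1.
have pbd : all pos (b2 ++ d) by rewrite all_cat pb2.
have W := WP (erefl _) pac pad E.
have W' := inv_equiv (WP (erefl _) pbc pbd e3).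
apply: sge_trans e1 _.
apply: sge_trans (_ : sg_equiv op (a1 ++ (c ++ inv c) ++ inv b1) _).
  exact: sge_sym (cong (inv_cancel_r c) a1 (inv b1)).
rewrite catA catA -catA -inv_cat.
apply: sge_trans (congr _ W) _.
apply: sge_trans (congl _ W') _.
rewrite inv_cat catA -(catA a2) -catA.
apply: sge_trans (cong (inv_cancel_r d) a2 (inv b2)) _.
exact: sge_sym e2.
Qed.

Lemma structure : is_structure_group op s G.
Proof.
split; last exact: surj.
move=> w1 w2; split; [exact: inj | exact: sound].
Qed.
End Main.

Unset Implicit Arguments.

Theorem mainTheorem2 (n : nat) (G : 'M[LF]_n -> Prop) (s : 'I_n -> 'M[LF]_n)
    (k : nat) :
  subgroup_Sigma G ->
  injective s ->
  (forall a, atom G a <-> exists i, a = s i) ->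
  generates s G ->
  (0 < k)%N ->
  (forall i, Dpart (s i) = mxpow (Dmat i) k) ->
  let op := fun i j => psi (s i) j in
  [/\ (permutation_free G <-> forall i j, s i *m s (op i j) = s j *m s (op j i)),
      ((forall i j, s i *m s (op i j) = s j *m s (op j i)) <->
         cycle_set op /\ is_structure_group op s G)
    & (permutation_free G <-> cycle_set op /\ is_structure_group op s G)].
Proof.
move=> hG hinj hat hgen hk hD op.
have [τ hs] := s_form hG hat hD.
have P1 : permutation_free G by apply: (PFG hG hat hk hs).
have P2 : forall i j, s i *m s (op i j) = s j *m s (op j i).
  move=> i j; exact: (relS hG hat hk hs).
have P3 : cycle_set op /\ is_structure_group op s G.
  split; [exact: (cycle hG hat hk hs) | exact: (structure hG hat hgen hk hs)].
by split; split.
Qed.
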